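(* Let $X\subseteq\mathbb{C}^n$ be a complex analytic set, $x\in X$, $\mathcal M\subseteq\mathcal O_{X,x}^p$ a submodule with matrix of generators $[\mathcal M]=[g_1\cdots g_r]$, and $k\in\mathbb N$. Write the matrix of generators of $\mathcal M_D$ as $$[\mathcal M_D]=\begin{bmatrix}[\mathcal M]&0\\ [\mathcal M]'&[\tilde{\mathcal M}]\end{bmatrix},$$ where the columns of $[\tilde{\mathcal M}]$ are $(z_i-z_i')g_j'$, $i=1,\dots,n$, $j=1,\dots,r$. Let $\mathcal J_{2k}(\mathcal M_D)$ be the ideal generated by $\{\det(\mathcal M_{IJ})\det(\tilde{\mathcal M}_{KL}): I,J,K,L\ k\text{-indexes}\}$. Then $\mathcal J_{2k}(\mathcal M_D)\subseteq I_\Delta^{k-1}J_2\big((J_k(\mathcal M))_D\big)$ at $(x,x)$.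
   Context: $z_1,\dots,z_n$ are coordinates on $\mathbb C^n$; $\pi_1,\pi_2:X\times X\to X$ are the projections; for an object $A$ on $X$ we write $A$ for $A\circ\pi_1$ and $A'$ for $A\circ\pi_2$. $I_\Delta=(z_1-z_1',\dots,z_n-z_n')$ is the ideal of the diagonal. For a matrix $A$ and $k$-indexes (strictly increasing tuples) $I,J$, $A_{IJ}$ is the submatrix with rows $I$ and columns $J$. For $h\in\mathcal O_X^q$, $h_D=(h\circ\pi_1,h\circ\pi_2)$, and for a submodule or ideal $N$, $N_D$ is generated by $\{h_D:h\in N\}$. $J_m(N)$ is the ideal of $m\times m$ minors of a matrix of generators of $N$. *)

(* Defs.v *)
From mathcomp Require Import all_boot all_algebra.
From mathcomp Require Import all_classical all_reals all_analysis.
From mathcomp Require Import complex.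
Import numFieldNormedType.Exports.

Set Implicit Arguments.
Unset Strict Implicit.
Unset Printing Implicit Defensive.

Import GRing.Theory Num.Theory.
Local Open Scope ring_scope.
Local Open Scope classical_set_scope.

(* The complex numbers C = R[i] (R a real closed field of reals, realType),
   seen as a normed space over itself, and C^n as row vectors, normed over C. *)
Definition Cx (R : realType) : normedModType R[i] := R[i]^o.
Definition Cn (R : realType) (n : nat) : normedModType R[i] := 'rV[R[i]]_n.

(* f is holomorphic in a neighbourhood of a: complex (C-linear Frechet)
   differentiable at every point near a. *)
Definition holo_near (R : realType) (n : nat) (f : Cn R n -> Cx R) (a : Cn R n)
  : Prop := \forall y \near a, differentiable f y.

Definition analytic_set (R : realType) (n : nat) (X : set (Cn R n)) : Prop :=
  exists D : set (Cn R n), [/\ open D, X `<=` D &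
    forall a, D a -> exists U : set (Cn R n), [/\ open U, U a, U `<=` D &
      exists m (f : 'I_m -> Cn R n -> Cx R),
        (forall l y, U y -> differentiable (f l) y) /\
        (forall y, U y -> (X y <-> forall l, f l y = 0))]].

(* f belongs to the ideal of O_{Y,y} generated by (the germs of) the functions
   in S: near y, on Y, f is an O-linear combination of finitely many elements
   of S with holomorphic coefficients. *)
Definition germ_ideal (R : realType) (N : nat) (Y : set (Cn R N)) (y : Cn R N)
  (S : set (Cn R N -> Cx R)) (f : Cn R N -> Cx R) : Prop :=
  exists m (s c : 'I_m -> Cn R N -> Cx R),
    [/\ forall l, S (s l), forall l, holo_near (c l) y &
        \forall w \near y, Y w -> f w = \sum_(l < m) c l w * s l w].

Definition kindex (k m : nat) (I : 'I_k -> 'I_m) : Prop :=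
  forall a b : 'I_k, (a < b)%N -> (I a < I b)%N.

Definition minor (R : realType) (p q k : nat) (A : 'M[R[i]]_(p, q))
  (I : 'I_k -> 'I_p) (J : 'I_k -> 'I_q) : R[i] :=
  \det (\matrix_(a, b) A (I a) (J b)).

Definition Mmat (R : realType) (n p r : nat)
  (g : 'I_p -> 'I_r -> Cn R n -> Cx R) (y : Cn R n) : 'M[R[i]]_(p, r) :=
  \matrix_(a, b) (g a b y : R[i]).

(* Points of C^n x C^n are w = (z, z') in C^(n+n); z = pi1 w, z' = pi2 w. *)
Definition pr1 (R : realType) (n : nat) (w : Cn R (n + n)) : Cn R n :=
  lsubmx (w : 'M[R[i]]_(1, n + n)).
Definition pr2 (R : realType) (n : nat) (w : Cn R (n + n)) : Cn R n :=
  rsubmx (w : 'M[R[i]]_(1, n + n)).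
Definition coord (R : realType) (n : nat) (y : Cn R n) (i : 'I_n) : R[i] :=
  (y : 'M[R[i]]_(1, n)) ord0 i.

Definition sqset (R : realType) (n : nat) (X : set (Cn R n)) : set (Cn R (n + n)) :=
  [set w | X (pr1 w) /\ X (pr2 w)].
Definition diagpt (R : realType) (n : nat) (x : Cn R n) : Cn R (n + n) :=
  (row_mx (x : 'M[R[i]]_(1, n)) (x : 'M[R[i]]_(1, n)) : 'M[R[i]]_(1, n + n)).

(* value at w of [M~]: p x (n*r) matrix whose column indexed by
   mxvec_index i j is (z_i - z_i') g_j'. *)
Definition Mtilde (R : realType) (n p r : nat)
  (g : 'I_p -> 'I_r -> Cn R n -> Cx R) (w : Cn R (n + n)) : 'M[R[i]]_(p, n * r) :=
  \matrix_(a < p) mxvec (\matrix_(i < n, j < r)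
      ((coord (pr1 w) i - coord (pr2 w) i) * (g a j (pr2 w) : R[i]))).

Definition J2kMD_gens (R : realType) (n p r k : nat)
  (g : 'I_p -> 'I_r -> Cn R n -> Cx R) : set (Cn R (n + n) -> Cx R) :=
  [set f | exists (I : 'I_k -> 'I_p) (J : 'I_k -> 'I_r)
                  (K : 'I_k -> 'I_p) (L : 'I_k -> 'I_(n * r)),
     [/\ kindex I, kindex J, kindex K, kindex L &
         f = fun w => minor (Mmat g (pr1 w)) I J * minor (Mtilde g w) K L]].

Definition in_Jk (R : realType) (n p r k : nat) (X : set (Cn R n)) (x : Cn R n)
  (g : 'I_p -> 'I_r -> Cn R n -> Cx R) (h : Cn R n -> Cx R) : Prop :=
  holo_near h x /\
  germ_ideal X x
    [set f | exists (I : 'I_k -> 'I_p) (J : 'I_k -> 'I_r),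
       [/\ kindex I, kindex J & f = fun y => minor (Mmat g y) I J]] h.

(* generators of I_Delta^(k-1) J_2((J_k(M))_D): a product of k-1 generators
   z_i - z_i' of I_Delta times a 2x2 minor  h l' - l h'  of two generators
   h_D = (h, h'), l_D = (l, l') of (J_k(M))_D, h, l in J_k(M). *)
Definition RHS_gens (R : realType) (n p r k : nat) (X : set (Cn R n)) (x : Cn R n)
  (g : 'I_p -> 'I_r -> Cn R n -> Cx R) : set (Cn R (n + n) -> Cx R) :=
  [set f | exists (sigma : 'I_k.-1 -> 'I_n) (h l : Cn R n -> Cx R),
     [/\ in_Jk k X x g h, in_Jk k X x g l &
         f = fun w =>
           (\prod_(t < k.-1) (coord (pr1 w) (sigma t) - coord (pr2 w) (sigma t)))
           * ((h (pr1 w) : R[i]) * l (pr2 w) - l (pr1 w) * h (pr2 w))]].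

(* Main.v *)
Require Import Defs.
From mathcomp Require Import all_boot all_algebra.
From mathcomp Require Import all_classical all_reals all_analysis.
From mathcomp Require Import complex.
From mathcomp Require Import fingroup perm ring.
Import Defs.
Import numFieldNormedType.Exports.
Import GRing.Theory Num.Theory.
Local Open Scope ring_scope.
Local Open Scope classical_set_scope.
Set Implicit Arguments.
Unset Strict Implicit.
Unset Printing Implicit Defensive.
Section Holo.
Variable R : realType.

Lemma dM N (f g : Cn R N -> Cx R) y : differentiable f y -> differentiable g y ->
  differentiable (fun z => f z * g z : Cx R) y.
Proof. move=> df dg. exact: (differentiableM df dg). Qed.
Lemma dD N (f g : Cn R N -> Cx R) y : differentiable f y -> differentiable g y ->
  differentiable (fun z => f z + g z : Cx R) y.
Proof. move=> df dg. exact: (differentiableD df dg). Qed.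
Lemma dC N (c : Cx R) (y : Cn R N) : differentiable (fun _ => c) y.
Proof. exact: differentiable_cst. Qed.
Lemma dco N j (y : Cn R N) :
  differentiable (fun w : Cn R N => (w : 'M[R[i]]_(1,N)) ord0 j : Cx R) y.
Proof. exact: differentiable_coord. Qed.

Lemma dsum N (I : Type) (r : seq I) (F : I -> Cn R N -> Cx R) y :
  (forall i, differentiable (F i) y) ->
  differentiable (fun z => \sum_(i <- r) F i z : Cx R) y.
Proof.
move=> HF; elim: r => [|a r IH].
  have -> : (fun z => \sum_(i <- [::]) F i z : Cx R) = (fun _ => 0 : Cx R).
    by apply/funext => z; rewrite big_nil.
  exact: dC.
have -> : (fun z => \sum_(i <- a :: r) F i z : Cx R) =
  (fun z => F a z + \sum_(i <- r) F i z : Cx R).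
  by apply/funext => z; rewrite big_cons.
exact: dD.
Qed.

Lemma dprod N (I : Type) (r : seq I) (F : I -> Cn R N -> Cx R) y :
  (forall i, differentiable (F i) y) ->
  differentiable (fun z => \prod_(i <- r) F i z : Cx R) y.
Proof.
move=> HF; elim: r => [|a r IH].
  have -> : (fun z => \prod_(i <- [::]) F i z : Cx R) = (fun _ => 1 : Cx R).
    by apply/funext => z; rewrite big_nil.
  exact: dC.
have -> : (fun z => \prod_(i <- a :: r) F i z : Cx R) =
  (fun z => F a z * \prod_(i <- r) F i z : Cx R).
  by apply/funext => z; rewrite big_cons.
exact: dM.
Qed.

Lemma ddet N k (A : Cn R N -> 'M[R[i]]_k) y :
  (forall a b, differentiable (fun z => A z a b : Cx R) y) ->
  differentiable (fun z => \det (A z) : Cx R) y.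
Proof.
move=> HA; rewrite /determinant.
apply: dsum => s; apply: dM; first exact: dC.
by apply: dprod => i; apply: HA.
Qed.

Lemma holo_cst N (c : Cx R) (y : Cn R N) : holo_near (fun _ => c) y.
Proof. near=> z; exact: dC. Unshelve. all: by end_near. Qed.
Lemma holo_all N (f : Cn R N -> Cx R) y : (forall z, differentiable f z) -> holo_near f y.
Proof. by move=> H; near=> z; apply: H. Unshelve. all: by end_near. Qed.
Lemma holo_mul N (f g : Cn R N -> Cx R) y : holo_near f y -> holo_near g y ->
  holo_near (fun z => f z * g z : Cx R) y.
Proof. by move=> Hf Hg; apply: filterS2 Hf Hg => z; apply: dM. Qed.
Lemma holo_add N (f g : Cn R N -> Cx R) y : holo_near f y -> holo_near g y ->
  holo_near (fun z => f z + g z : Cx R) y.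
Proof. by move=> Hf Hg; apply: filterS2 Hf Hg => z; apply: dD. Qed.

Section Germ.
Variables (N : nat) (Y : set (Cn R N)) (y : Cn R N) (S : set (Cn R N -> Cx R)).

Lemma germ_ext f f' : germ_ideal Y y S f -> (forall w, f' w = f w) -> germ_ideal Y y S f'.
Proof.
move=> [m [s [c [Ss Hc Hf]]]] E; exists m, s, c; split => //.
by apply: filterS Hf => w H Yw; rewrite E H.
Qed.

Lemma germ_near f f' : germ_ideal Y y S f ->
  (\forall w \near y, Y w -> f' w = f w) -> germ_ideal Y y S f'.
Proof.
move=> [m [s [c [Ss Hc Hf]]]] E; exists m, s, c; split => //.
by apply: filterS2 Hf E => w H1 H2 Yw; rewrite H2 // H1.
Qed.

Lemma germ0 : germ_ideal Y y S (fun _ => 0).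
Proof.
exists 0%N, (fun _ _ => 0), (fun _ _ => 0); split => //; first by case.
  by case.
by near=> w => _; rewrite big_ord0.
Unshelve. all: by end_near.
Qed.

Lemma germ_gen s : S s -> germ_ideal Y y S s.
Proof.
move=> Ss; exists 1%N, (fun _ => s), (fun _ _ => 1); split => //.
  by move=> _; exact: holo_cst.
by near=> w => _; rewrite big_ord1 mul1r.
Unshelve. all: by end_near.
Qed.

Lemma germ_add f1 f2 : germ_ideal Y y S f1 -> germ_ideal Y y S f2 ->
  germ_ideal Y y S (fun w => f1 w + f2 w).
Proof.
move=> [m1 [s1 [c1 [Ss1 Hc1 Hf1]]]] [m2 [s2 [c2 [Ss2 Hc2 Hf2]]]].
exists (m1 + m2)%N, (fun l => match fintype.split l with inl a => s1 a | inr b => s2 b end),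
  (fun l => match fintype.split l with inl a => c1 a | inr b => c2 b end); split.
- by move=> l; case: (fintype.split l).
- by move=> l; case: (fintype.split l).
- apply: filterS2 Hf1 Hf2 => w H1 H2 Yw; rewrite H1 // H2 // big_split_ord /=.
  congr (_ + _); apply: eq_bigr => i _.
    by rewrite (unsplitK (inl i)).
  by rewrite (unsplitK (inr i)).
Qed.

Lemma germ_mul d f : holo_near d y -> germ_ideal Y y S f ->
  germ_ideal Y y S (fun w => d w * f w).
Proof.
move=> Hd [m [s [c [Ss Hc Hf]]]].
exists m, s, (fun l w => d w * c l w); split => //.
  by move=> l; apply: holo_mul.
apply: filterS Hf => w H Yw; rewrite H // big_distrr /=.
by apply: eq_bigr => l _; rewrite mulrA.
Qed.

Lemma germ_comb m (c s : 'I_m -> Cn R N -> Cx R) :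
  (forall l, holo_near (c l) y) -> (forall l, germ_ideal Y y S (s l)) ->
  germ_ideal Y y S (fun w => \sum_(l < m) c l w * s l w).
Proof.
elim: m c s => [|m IH] c s Hc Hs.
  by apply: (@germ_ext (fun _ => 0)); [exact: germ0 | move=> w; rewrite big_ord0].
apply: germ_ext; last by move=> w; rewrite big_ord_recr.
apply: germ_add; last exact: germ_mul.
exact: (IH (fun l => c (widen_ord (leqnSn m) l)) (fun l => s (widen_ord (leqnSn m) l))).
Qed.
End Germ.
End Holo.
Section Alg.
Variable R : realType.

Lemma sort_minor k r (J' J0 : 'I_k -> 'I_r) : kindex J0 ->
  exists (c : R[i]) (Js : 'I_k -> 'I_r), kindex Js /\
   forall p (A : 'M[R[i]]_(p, r)) (K : 'I_k -> 'I_p), minor A K J' = c * minor A K Js.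
Proof.
move=> kJ0; case: (boolP (injectiveb J')) => [/injectiveP inj | /injectivePn [t1 [t2 nt Et]]]; last first.
  exists 0, J0; split => // p A K; rewrite mul0r /minor -det_tr.
  by apply: (determinant_alternate nt) => a; rewrite !mxE Et.
pose S := J' @: [set: 'I_k]%SET.
have hS : #|S| = k by rewrite card_imset // cardsT card_ord.
have HJ t : J' t \in S by apply: imset_f; rewrite inE.
pose Js (t : 'I_k) : 'I_r := enum_val (cast_ord (esym hS) t).
pose s0 (t : 'I_k) : 'I_k := cast_ord hS (enum_rank_in (HJ t) (J' t)).
have Es t : Js (s0 t) = J' t by rewrite /Js /s0 cast_ordK enum_rankK_in.
have s_inj : injective s0 by move=> a b E; apply: inj; rewrite -!Es E.
pose sg := perm s_inj.
exists ((-1) ^+ (sg^-1)%g), Js; split.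
  move=> a b ab.
  have inc : sorted ltn (map val (enum S)).
    rewrite -[enum _](eq_filter (mem_enum _)).
    rewrite -(eq_filter (mem_map val_inj _)) -filter_map.
    by rewrite (sorted_filter ltn_trans) // unlock val_ord_enum iota_ltn_sorted.
  have sz : size (map val (enum S)) = k by rewrite size_map -cardE.
  rewrite /Js !(enum_val_nth (J' a)).
  have Nt (t : 'I_k) : nth 0%N (map val (enum S)) t = val (nth (J' a) (enum S) t).
    by rewrite (nth_map (J' a)) // -cardE hS.
  rewrite -!Nt.
  apply: (sorted_ltn_nth ltn_trans) => //; rewrite inE sz //=.
move=> p A K; rewrite /minor.
have -> : \matrix_(a, b) A (K a) (J' b) = col_perm sg (\matrix_(a, b) A (K a) (Js b)).
  by apply/matrixP => a b; rewrite !mxE permE Es.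
by rewrite col_permE det_mulmx det_perm mulrC.
Qed.
End Alg.
Section Til.
Variable R : realType.

Definition iv m n (q : 'I_(m * n)) : 'I_m * 'I_n :=
  enum_val (cast_ord (esym (mxvec_cast m n)) q).

Lemma ivK m n (q : 'I_(m * n)) : mxvec_index (iv q).1 (iv q).2 = q.
Proof.
rewrite /mxvec_index /iv; case E: (enum_val _) => [i j] /=.
by rewrite -E enum_valK cast_ordKV.
Qed.

Lemma Mtilde_minor n p r k (g : 'I_p -> 'I_r -> Cn R n -> Cx R) w
  (K : 'I_k -> 'I_p) (L : 'I_k -> 'I_(n * r)) :
  minor (Mtilde g w) K L = minor (Mmat g (pr2 w)) K (fun t => (iv (L t)).2) *
    \prod_(t < k) (coord (pr1 w) (iv (L t)).1 - coord (pr2 w) (iv (L t)).1).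
Proof.
rewrite /minor.
have -> : \matrix_(a, b) Mtilde g w (K a) (L b) =
  (\matrix_(a, b) Mmat g (pr2 w) (K a) ((iv (L b)).2)) *m
  diag_mx (\row_t (coord (pr1 w) (iv (L t)).1 - coord (pr2 w) (iv (L t)).1)).
  apply/matrixP => a b; rewrite mul_mx_diag !mxE.
  rewrite -{1}(ivK (L b)) mxvecE mxE mulrC.
  done.
rewrite det_mulmx det_diag; congr (_ * _).
by apply: eq_bigr => t _; rewrite mxE.
Qed.
End Til.
Section Main.
Variable R : realType.

Lemma dcoord1 N (i : 'I_N) (w : Cn R (N + N)) :
  differentiable (fun w : Cn R (N + N) => coord (pr1 w) i : Cx R) w.
Proof.
have -> : (fun w : Cn R (N + N) => coord (pr1 w) i : Cx R) =
  (fun w : Cn R (N + N) => (w : 'M[R[i]]_(1, N + N)) ord0 (lshift N i) : Cx R).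
  by apply/funext => z; rewrite /coord /pr1 mxE.
exact: dco.
Qed.
Lemma dcoord2 N (i : 'I_N) (w : Cn R (N + N)) :
  differentiable (fun w : Cn R (N + N) => coord (pr2 w) i : Cx R) w.
Proof.
have -> : (fun w : Cn R (N + N) => coord (pr2 w) i : Cx R) =
  (fun w : Cn R (N + N) => (w : 'M[R[i]]_(1, N + N)) ord0 (rshift N i) : Cx R).
  by apply/funext => z; rewrite /coord /pr2 mxE.
exact: dco.
Qed.
Lemma dcoord N (i : 'I_N) (w : Cn R N) :
  differentiable (fun y : Cn R N => coord y i : Cx R) w.
Proof. exact: dco. Qed.

Lemma holo_minor n p r k (x : Cn R n) (g : 'I_p -> 'I_r -> Cn R n -> Cx R)
  (I : 'I_k -> 'I_p) (J : 'I_k -> 'I_r) :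
  (forall a b, holo_near (g a b) x) ->
  holo_near (fun y => minor (Mmat g y) I J : Cx R) x.
Proof.
move=> Hg.
have H : \forall y \near x, forall a b, differentiable (g a b) y.
  apply: (@filter_forall _ 'I_p (fun a (y : Cn R n) => forall b, differentiable (g a b) y) (nbhs x) (nbhs_filter x)) => a.
  apply: (@filter_forall _ 'I_r (fun b (y : Cn R n) => differentiable (g a b) y) (nbhs x) (nbhs_filter x)) => b.
  exact: Hg.
apply: filterS H => y Hy; rewrite /minor; apply: ddet => a b.
rewrite (_ : (fun z => _) = g (I a) (J b)); first exact: Hy.
by apply/funext => z; rewrite !mxE.
Qed.

Lemma gen_in n p r k (X : set (Cn R n)) x (g : 'I_p -> 'I_r -> Cn R n -> Cx R) :
  (forall a b, holo_near (g a b) x) -> (1 <= k)%N ->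
  forall s, J2kMD_gens k g s -> germ_ideal (sqset X) (diagpt x) (RHS_gens k X x g) s.
Proof.
move=> Hg; case: k => [//|k'] _ s [I [J [K [L [kI kJ kK kL ->]]]]].
have [c [Js [kJs Hs]]] := @sort_minor R k'.+1 r (fun t => (iv (L t)).2) J kJ.
pose m1 := fun y : Cn R n => minor (Mmat g y) I J : Cx R.
pose m2 := fun y : Cn R n => minor (Mmat g y) K Js : Cx R.
pose i0 := (iv (L ord_max)).1.
pose sigma := fun t : 'I_k' => (iv (L (widen_ord (leqnSn k') t))).1.
pose P := fun w : Cn R (n + n) =>
  \prod_(t < k') (coord (pr1 w) (sigma t) - coord (pr2 w) (sigma t)) : Cx R.
pose h1 := fun y : Cn R n => coord y i0 * m1 y : Cx R.
have Jm1 : in_Jk k'.+1 X x g m1.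
  split; first exact: holo_minor.
  by apply: germ_gen; exists I, J; split.
have Jm2 : in_Jk k'.+1 X x g m2.
  split; first exact: holo_minor.
  by apply: germ_gen; exists K, Js; split.
have Jh1 : in_Jk k'.+1 X x g h1.
  split.
    apply: holo_mul; last exact: holo_minor.
    by apply: holo_all => z; exact: dcoord.
  apply: germ_mul; first by apply: holo_all => z; exact: dcoord.
  by apply: germ_gen; exists I, J; split.
pose G1 := fun w : Cn R (n + n) =>
  P w * (h1 (pr1 w) * m2 (pr2 w) - m2 (pr1 w) * h1 (pr2 w)) : Cx R.
pose G2 := fun w : Cn R (n + n) =>
  P w * (m1 (pr1 w) * m2 (pr2 w) - m2 (pr1 w) * m1 (pr2 w)) : Cx R.
have RG1 : RHS_gens k'.+1 X x g G1 by exists sigma, h1, m2; split.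
have RG2 : RHS_gens k'.+1 X x g G2 by exists sigma, m1, m2; split.
have HG : germ_ideal (sqset X) (diagpt x) (RHS_gens k'.+1 X x g)
  (fun w => c * G1 w + (- c * coord (pr2 w) i0) * G2 w).
  apply: germ_add.
    by apply: (germ_mul (holo_cst c _)); apply: germ_gen.
  apply: germ_mul; last exact: germ_gen.
  apply: holo_mul; first exact: holo_cst.
  by apply: holo_all => z; apply: dcoord2.
apply: (germ_ext HG) => w.
rewrite Mtilde_minor Hs big_ord_recr /=.
rewrite /G1 /G2 /P /h1 /m1 /m2 /sigma /i0.
ring.
Qed.
End Main.


Theorem mainTheorem12 (R : realType) (n p r k : nat)
  (X : set (Cn R n)) (x : Cn R n) (g : 'I_p -> 'I_r -> Cn R n -> Cx R) :
  analytic_set X -> X x ->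
  (forall (a : 'I_p) (b : 'I_r), holo_near (g a b) x) ->
  (1 <= k)%N ->
  forall f : Cn R (n + n) -> Cx R,
    germ_ideal (sqset X) (diagpt x) (J2kMD_gens k g) f ->
    germ_ideal (sqset X) (diagpt x) (RHS_gens k X x g) f.
Proof.
move=> _ _ Hg k1 f [m [s [c [Ss Hc Hf]]]].
apply: (germ_near _ Hf).
apply: germ_comb => // l.
exact: gen_in.
Qed.
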